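(* Over pairs of integers $n,m\ge 2$ with $n,m\to\infty$, \[ \liminf_{n,m\to\infty}\frac{\gamma_{2t}(K_n\Box K_m)}{\min\{n,m\}}=\frac32\qquad\text{and}\qquad\limsup_{n,m\to\infty}\frac{\gamma_{2t}(K_n\Box K_m)}{\min\{n,m\}}=2. \] Furthermore, for every real number $\alpha$ with $\frac32\le\alpha\le 2$ there exists a sequence of pairs of integers $(n_k,m_k)$, $k=1,2,\dots$, with $n_k,m_k\ge 2$, such that \[ \lim_{k\to\infty}\frac{\gamma_{2t}(K_{n_k}\Box K_{m_k})}{\min\{n_k,m_k\}}=\alpha. \]
   Context: For a graph $G=(V,E)$, a set $S\subseteq V$ is a total $2$-dominating set if every vertex of $V$ (including those in $S$) is adjacent to at least $2$ vertices of $S$; $\gamma_{2t}(G)$ is the minimum cardinality of such a set. $G\Box H$ denotes the Cartesian product: vertex set $V(G)\times V(H)$, with $(u_1,v_1)\sim(u_2,v_2)$ iff either $u_1=u_2$ and $v_1\sim v_2$, or $v_1=v_2$ and $u_1\sim u_2$. $K_n$ is the complete graph on $n$ vertices. *)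

(* Defs.v *)
From Stdlib Require Import Reals.
From mathcomp Require Import all_boot.

Set Implicit Arguments.
Unset Strict Implicit.
Unset Printing Implicit Defensive.

Definition KK_adj (n m : nat) : rel ('I_n * 'I_m) :=
  fun x y => ((x.1 == y.1) && (x.2 != y.2)) || ((x.2 == y.2) && (x.1 != y.1)).

Definition total2dom (T : finType) (e : rel T) (S : {set T}) : bool :=
  [forall v : T, 2 <= #|[set u in S | e v u]|].

(* gamma_{2t}: minimum cardinality of a total 2-dominating set
   (default #|T| if none exists; for K_n [] K_m with n,m >= 2 the whole
   vertex set is total 2-dominating, so the default is never the value). *)
Definition gamma2t (T : finType) (e : rel T) : nat :=
  \big[minn/#|T|]_(S : {set T} | total2dom e S) #|S|.

Definition gamma2t_KK (n m : nat) : nat := gamma2t (@KK_adj n m).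

Definition ratio (n m : nat) : R := Rdiv (INR (gamma2t_KK n m)) (INR (minn n m)).

Definition liminf2_is (f : nat -> nat -> R) (l : R) : Prop :=
  (forall eps : R, Rlt R0 eps ->
     exists N : nat, forall n m : nat, le N n -> le N m ->
       Rlt (Rminus l eps) (f n m)) /\
  (forall eps : R, Rlt R0 eps -> forall N : nat,
     exists n m : nat, le N n /\ le N m /\ Rlt (f n m) (Rplus l eps)).

Definition limsup2_is (f : nat -> nat -> R) (l : R) : Prop :=
  (forall eps : R, Rlt R0 eps ->
     exists N : nat, forall n m : nat, le N n -> le N m ->
       Rlt (f n m) (Rplus l eps)) /\
  (forall eps : R, Rlt R0 eps -> forall N : nat,
     exists n m : nat, le N n /\ le N m /\ Rlt (Rminus l eps) (f n m)).

(* Main.v *)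
Require Import Defs.
From Stdlib Require Import Reals.
From mathcomp Require Import all_boot.
From Stdlib Require Import Lra Lia ZArith.
From mathcomp Require Import all_boot zify.
Set Implicit Arguments.
Unset Strict Implicit.


Definition rowset n m (X : {set 'I_n * 'I_m}) (i : 'I_n) := [set x in X | x.1 == i].
Definition colset n m (X : {set 'I_n * 'I_m}) (j : 'I_m) := [set x in X | x.2 == j].

Lemma card_rows n m (X : {set 'I_n * 'I_m}) : #|X| = \sum_(i : 'I_n) #|rowset X i|.
Proof.
rewrite -sum1_card (partition_big (fun x => x.1) xpredT) //=.
apply: eq_bigr => i _; rewrite -sum1_card; apply: eq_bigl => x; by rewrite !inE.
Qed.

Lemma card_cols n m (X : {set 'I_n * 'I_m}) : #|X| = \sum_(j : 'I_m) #|colset X j|.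
Proof.
rewrite -sum1_card (partition_big (fun x => x.2) xpredT) //=.
apply: eq_bigr => i _; rewrite -sum1_card; apply: eq_bigl => x; by rewrite !inE.
Qed.

Lemma ord_card_le n (A : {set 'I_n}) (L : seq nat) :
  (forall j, j \in A -> val j \in L) -> #|A| <= size L.
Proof.
move=> H; rewrite cardE -(size_map val).
apply: uniq_leq_size; first by rewrite map_inj_uniq ?enum_uniq //; apply: val_inj.
move=> a /mapP [j]; rewrite mem_enum => /H ? ->; done.
Qed.

Lemma ord_card_ge n (A : {set 'I_n}) (L : seq nat) :
  uniq L -> all (fun a => a < n) L -> (forall j : 'I_n, val j \in L -> j \in A) ->
  size L <= #|A|.
Proof.
move=> U /allP Hl H; rewrite cardE -(size_map val).
apply: uniq_leq_size => // a aL.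
have Ha := Hl a aL.
apply/mapP; exists (Ordinal Ha) => //; rewrite mem_enum; by apply: H.
Qed.

Lemma row_le n m (X : {set 'I_n * 'I_m}) i L :
  (forall x, x \in X -> x.1 = i -> val x.2 \in L) -> #|rowset X i| <= size L.
Proof.
move=> H.
have <- : #|[set x.2 | x in rowset X i]| = #|rowset X i|.
  apply: card_in_imset => [[a b] [c d]]; rewrite !inE /= => /andP[_ /eqP->] /andP[_ /eqP->] ->; done.
apply: ord_card_le => j /imsetP [[a b]]; rewrite inE /= => /andP[Hx /eqP Ha] ->.
exact: (H (a, b) Hx Ha).
Qed.

Lemma col_le n m (X : {set 'I_n * 'I_m}) j L :
  (forall x, x \in X -> x.2 = j -> val x.1 \in L) -> #|colset X j| <= size L.
Proof.
move=> H.
have <- : #|[set x.1 | x in colset X j]| = #|colset X j|.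
  apply: card_in_imset => [[a b] [c d]]; rewrite !inE /= => /andP[_ /eqP->] /andP[_ /eqP->] ->; done.
apply: ord_card_le => i /imsetP [[a b]]; rewrite inE /= => /andP[Hx /eqP Ha] ->.
exact: (H (a, b) Hx Ha).
Qed.

Lemma row_ge n m (X : {set 'I_n * 'I_m}) i L :
  uniq L -> all (fun a => a < m) L -> (forall j : 'I_m, val j \in L -> (i, j) \in X) ->
  size L <= #|rowset X i|.
Proof.
move=> U Hl H.
have -> : #|rowset X i| = #|[set x.2 | x in rowset X i]|.
  symmetry; apply: card_in_imset => [[a b] [c d]]; rewrite !inE /= => /andP[_ /eqP->] /andP[_ /eqP->] ->; done.
apply: ord_card_ge => // j jL; apply/imsetP; exists (i, j) => //.
by rewrite inE H //= eqxx.
Qed.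

Lemma col_ge n m (X : {set 'I_n * 'I_m}) j L :
  uniq L -> all (fun a => a < n) L -> (forall i : 'I_n, val i \in L -> (i, j) \in X) ->
  size L <= #|colset X j|.
Proof.
move=> U Hl H.
have -> : #|colset X j| = #|[set x.1 | x in colset X j]|.
  symmetry; apply: card_in_imset => [[a b] [c d]]; rewrite !inE /= => /andP[_ /eqP->] /andP[_ /eqP->] ->; done.
apply: ord_card_ge => // i iL; apply/imsetP; exists (i, j) => //.
by rewrite inE H //= eqxx.
Qed.


Lemma nbr_eq n m (S : {set 'I_n * 'I_m}) (v : 'I_n * 'I_m) :
  #|[set u in S | KK_adj v u]| + 2 * (v \in S) = #|rowset S v.1| + #|colset S v.2|.
Proof.
have E : [set u in S | KK_adj v u] = (rowset S v.1 :\ v) :|: (colset S v.2 :\ v).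
  apply/setP => [[a b]]; case: v => c d; rewrite !inE /KK_adj /= !xpair_eqE.
  rewrite [c == a]eq_sym [d == b]eq_sym.
  by case: (a == c); case: (b == d); case: ((a, b) \in S).
have D : (rowset S v.1 :\ v) :&: (colset S v.2 :\ v) = set0.
  apply/setP => [[a b]]; case: v {E} => c d; rewrite !inE /= !xpair_eqE.
  by case: (a == c); case: (b == d); rewrite ?andbF ?andbT.
have := cardsU (rowset S v.1 :\ v) (colset S v.2 :\ v).
rewrite -E D cards0 subn0 => ->.
rewrite (cardsD1 v (rowset S v.1)) (cardsD1 v (colset S v.2)) !inE !eqxx !andbT.
move: (v \in S) (#|rowset S v.1 :\ v|) (#|colset S v.2 :\ v|) => [] a b /=; lia.
Qed.

Lemma deg n m (S : {set 'I_n * 'I_m}) : total2dom (@KK_adj n m) S ->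
  forall v, 2 + 2 * (v \in S) <= #|rowset S v.1| + #|colset S v.2|.
Proof.
move=> /forallP H v; rewrite -nbr_eq; have := H v; move: (v \in S) => [] /= h; rewrite leq_add2r; exact: h.
Qed.

Lemma sum3 (I : Type) (r : seq I) (F : I -> nat) :
  \sum_(i <- r) (3 * F i) = 3 * \sum_(i <- r) F i.
Proof. elim: r => [|a r IH]; rewrite ?big_nil ?big_cons ?IH //; lia. Qed.

Lemma lowerL n m (S : {set 'I_n * 'I_m}) : total2dom (@KK_adj n m) S ->
  2 * minn n m <= #|S| \/ 3 * (n + m) <= 4 * #|S|.
Proof.
move=> HS; have D := deg HS.
case: (boolP [exists i, #|rowset S i| == 0]) => [/existsP [i /eqP Hi]|Hr].
  left.
  have H2 : forall j, 2 <= #|colset S j|.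
    move=> j; have := D (i, j); rewrite /= Hi.
    case Hv: ((i, j) \in S); last by [].
    have : (i, j) \in rowset S i by rewrite inE Hv eqxx.
    by move/eqP: Hi; rewrite cards_eq0 => /eqP ->; rewrite inE.
  rewrite (card_cols S); apply: (@leq_trans (\sum_(j : 'I_m) 2)); last by apply: leq_sum => j _; exact: H2 j.
  rewrite sum_nat_const card_ord; lia.
case: (boolP [exists j, #|colset S j| == 0]) => [/existsP [j /eqP Hj]|Hc].
  left.
  have H2 : forall i, 2 <= #|rowset S i|.
    move=> i; have := D (i, j); rewrite /= Hj.
    case Hv: ((i, j) \in S); last by rewrite addn0.
    have : (i, j) \in colset S j by rewrite inE Hv eqxx.
    by move/eqP: Hj; rewrite cards_eq0 => /eqP ->; rewrite inE.
  rewrite (card_rows S); apply: (@leq_trans (\sum_(i : 'I_n) 2)); last by apply: leq_sum => i _; exact: H2 i.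
  rewrite sum_nat_const card_ord; lia.
right.
have R1 : forall i, 1 <= #|rowset S i|.
  move=> i; case: (posnP #|rowset S i|) => // H0.
  by move: Hr; rewrite negb_exists => /forallP /(_ i); rewrite H0.
have C1 : forall j, 1 <= #|colset S j|.
  move=> j; case: (posnP #|colset S j|) => // H0.
  by move: Hc; rewrite negb_exists => /forallP /(_ j); rewrite H0.
set A := [set x in S | #|rowset S x.1| == 1].
set B := [set x in S | #|colset S x.2| == 1].
have RI : forall i, 6 + #|rowset B i| <= 3 * #|rowset S i| + 3 * #|rowset A i|.
  move=> i.
  have b1 : #|rowset B i| <= #|rowset S i|.
    by apply: subset_leq_card; apply/subsetP => x; rewrite !inE => /andP[/andP[-> _] ->].
  have b2 : #|rowset S i| <= 2 -> #|rowset B i| = 0.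
    move=> Hle; apply: eq_card0 => x; rewrite !inE.
    apply/negP => /andP[/andP[xS /eqP c1] /eqP xi].
    have := D x; rewrite xS c1 xi; lia.
  have a1 : #|rowset S i| = 1 -> 1 <= #|rowset A i|.
    move=> H1; rewrite -H1; apply: subset_leq_card; apply/subsetP => x.
    by rewrite !inE => /andP[xS /eqP xi]; rewrite xS xi H1 !eqxx.
  have := R1 i; move: b1 b2 a1; lia.
have CI : forall j, 6 + #|colset A j| <= 3 * #|colset S j| + 3 * #|colset B j|.
  move=> j.
  have b1 : #|colset A j| <= #|colset S j|.
    by apply: subset_leq_card; apply/subsetP => x; rewrite !inE => /andP[/andP[-> _] ->].
  have b2 : #|colset S j| <= 2 -> #|colset A j| = 0.
    move=> Hle; apply: eq_card0 => x; rewrite !inE.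
    apply/negP => /andP[/andP[xS /eqP c1] /eqP xi].
    have := D x; rewrite xS c1 xi; lia.
  have a1 : #|colset S j| = 1 -> 1 <= #|colset B j|.
    move=> H1; rewrite -H1; apply: subset_leq_card; apply/subsetP => x.
    by rewrite !inE => /andP[xS /eqP xi]; rewrite xS xi H1 !eqxx.
  have := C1 j; move: b1 b2 a1; lia.
have SR : 6 * n + #|B| <= 3 * #|S| + 3 * #|A|.
  have : \sum_(i : 'I_n) (6 + #|rowset B i|) <= \sum_(i : 'I_n) (3 * #|rowset S i| + 3 * #|rowset A i|).
    by apply: leq_sum => i _; exact: RI i.
  by rewrite [X in X <= _]big_split [X in _ <= X]big_split !sum3 sum_nat_const card_ord -!card_rows mulnC.
have SC : 6 * m + #|A| <= 3 * #|S| + 3 * #|B|.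
  have : \sum_(j : 'I_m) (6 + #|colset A j|) <= \sum_(j : 'I_m) (3 * #|colset S j| + 3 * #|colset B j|).
    by apply: leq_sum => j _; exact: CI j.
  by rewrite [X in X <= _]big_split [X in _ <= X]big_split !sum3 sum_nat_const card_ord -!card_cols mulnC.
have AB : #|A| + #|B| <= #|S|.
  have E : A :&: B = set0.
    apply/setP => x; rewrite !inE; apply/negP => /andP[/andP[xS /eqP r1] /andP[_ /eqP c1]].
    have := D x; rewrite xS r1 c1; lia.
  have := cardsU A B; rewrite E cards0 subn0 => <-.
  by apply: subset_leq_card; apply/subsetP => x; rewrite !inE => /orP[] /andP[].
lia.
Qed.

Lemma gamma_ge (T : finType) (e : rel T) L :
  (forall S, total2dom e S -> L <= #|S|) -> L <= #|T| -> L <= gamma2t e.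
Proof.
move=> H HT; rewrite /gamma2t.
apply: (big_ind (fun v => L <= v)) => //.
  by move=> a b Ha Hb; rewrite leq_min Ha Hb.
Qed.

Lemma bigmin_le_mem (I : eqType) (r : seq I) (P : pred I) (F : I -> nat) d i0 :
  i0 \in r -> P i0 -> \big[minn/d]_(i <- r | P i) F i <= F i0.
Proof.
elim: r => // a r IH; rewrite in_cons big_cons => /orP [/eqP <- Hp | Hr Hp].
  by rewrite Hp; exact: geq_minl.
case: (P a); [exact: leq_trans (geq_minr _ _) (IH Hr Hp) | exact: IH].
Qed.

Lemma gamma_le (T : finType) (e : rel T) S : total2dom e S -> gamma2t e <= #|S|.
Proof.
move=> H; rewrite /gamma2t; apply: bigmin_le_mem => //; exact: mem_index_enum.
Qed.

Lemma tot_of n m (S : {set 'I_n * 'I_m}) :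
  (forall v, 2 + 2 * (v \in S) <= #|rowset S v.1| + #|colset S v.2|) ->
  total2dom (@KK_adj n m) S.
Proof.
move=> H; apply/forallP => v; have := H v; rewrite -nbr_eq; move: (v \in S) => [] /=.
  by rewrite leq_add2r.
by rewrite !addn0.
Qed.

Lemma sum_split n x (f : 'I_n -> nat) a b : x <= n ->
  (forall i : 'I_n, i < x -> f i <= a) -> (forall i : 'I_n, x <= i -> f i <= b) ->
  \sum_(i : 'I_n) f i <= a * x + b * (n - x).
Proof.
move=> Hx Ha Hb.
pose g := fun k : nat => if k < x then a else b.
apply: (@leq_trans (\sum_(i < n) g i)).
  apply: leq_sum => i _; rewrite /g; case: ltnP => h; [exact: Ha | exact: Hb].
rewrite -(big_mkord xpredT g) (@big_cat_nat _ _ _ x 0 n _ _ (leq0n x) Hx) /=.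
rewrite (@eq_big_nat _ _ _ 0 x _ (fun _ => a)); last by move=> i /andP[_ h]; rewrite /g h.
rewrite (@eq_big_nat _ _ _ x n _ (fun _ => b)); last by move=> i /andP[h _]; rewrite /g ltnNge h.
rewrite !sum_nat_const_nat; lia.
Qed.

Lemma succ_mod k i : i < k -> i.+1 %% k = if i.+1 < k then i.+1 else 0.
Proof.
move=> h; case: ltnP => h2; first by rewrite modn_small.
have -> : i.+1 = k by lia.
by rewrite modnn.
Qed.

Definition Scirc n m : {set 'I_n * 'I_m} :=
  [set v : 'I_n * 'I_m | (v.1 < minn n m) && ((val v.2 == val v.1) || (val v.2 == (v.1).+1 %% minn n m))].

Lemma circ_row_le n m (i : 'I_n) : #|rowset (Scirc n m) i| <= (if i < minn n m then 2 else 0).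
Proof.
case: ifP => h.
  apply: (@row_le _ _ _ i [:: val i; (val i).+1 %% minn n m]) => [[a b]].
  by rewrite inE /= => /andP[_ /orP[] /eqP ->] -> ; rewrite !inE eqxx ?orbT.
apply: (@row_le _ _ _ i [::]) => [[a b]].
by rewrite inE /= => /andP[ha _] hai; rewrite hai h in ha.
Qed.

Lemma circ_row_ge n m (i : 'I_n) : 2 <= minn n m -> i < minn n m -> 2 <= #|rowset (Scirc n m) i|.
Proof.
move=> hk hi; set k := minn n m in hk hi *.
have hs := succ_mod hi.
apply: (@row_ge _ _ _ i [:: val i; (val i).+1 %% k]).
- rewrite /= !inE hs andbT; case: ifP; lia.
- rewrite /= hs; apply/andP; split; first by lia.
  by case: ifP; lia.
- move=> j; rewrite !inE /= /k => ->; by rewrite hi.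
Qed.

Lemma circ_col_ge n m (j : 'I_m) : 2 <= minn n m -> j < minn n m -> 2 <= #|colset (Scirc n m) j|.
Proof.
move=> hk hj; set k := minn n m in hk hj *.
apply: (@col_ge _ _ _ j [:: val j; if val j == 0 then k.-1 else (val j).-1]).
- rewrite /= !inE andbT; case: ifP; lia.
- rewrite /= andbT; apply/andP; split; first by lia.
  by case: ifP; lia.
- move=> i; rewrite !inE /= => hi.
  have hik : i < k by case: ifP hi; lia.
  rewrite /k in hik *; rewrite hik /=.
  rewrite (succ_mod hik); case: ifP hi; case: ifP; lia.
Qed.

Lemma comb4 (b : bool) r c : 2 <= r -> 2 <= c -> 2 + 2 * b <= r + c.
Proof. case: b => /=; lia. Qed.
Lemma comb_r (b : bool) r c : b = false -> 2 <= r -> 2 + 2 * b <= r + c.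
Proof. move=> ->; lia. Qed.
Lemma comb_c (b : bool) r c : b = false -> 2 <= c -> 2 + 2 * b <= r + c.
Proof. move=> ->; lia. Qed.

Lemma circ_tot n m : 2 <= minn n m -> total2dom (@KK_adj n m) (Scirc n m).
Proof.
move=> hk; apply: tot_of => v.
case: (ltnP v.1 (minn n m)) => hi; case: (ltnP v.2 (minn n m)) => hj.
- apply: comb4; [exact: circ_row_ge | exact: circ_col_ge].
- apply: comb_r; last exact: circ_row_ge.
  rewrite inE hi /=; apply/negbTE; rewrite negb_or; apply/andP; split.
    apply/eqP => e; move: hj; by rewrite e leqNgt hi.
  rewrite succ_mod //; case: ifP => h; apply/eqP => e; move: hj; rewrite e; [by rewrite leqNgt h | by move=> h0; move: (leq_trans hk h0)].
- apply: comb_c; last exact: circ_col_ge.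
  by rewrite inE ltnNge hi.
- have := ltn_ord v.1; have := ltn_ord v.2; lia.
Qed.

Lemma gamma_upper n m : 2 <= n -> 2 <= m -> gamma2t_KK n m <= 2 * minn n m.
Proof.
move=> hn hm; have hk : 2 <= minn n m by lia.
apply: leq_trans (gamma_le (circ_tot hk)) _.
rewrite card_rows.
apply: leq_trans (@sum_split n (minn n m) _ 2 0 (geq_minl n m) _ _) _.
- by move=> i hi; have := @circ_row_le n m i; rewrite hi.
- by move=> i hi; have := @circ_row_le n m i; rewrite ltnNge hi.
- lia.
Qed.

Definition Sstar x y : {set 'I_(x + 3 * y) * 'I_(3 * x + y)} :=
  [set v : 'I_(x + 3 * y) * 'I_(3 * x + y) |
    ((v.1 < x) && (y <= v.2) && ((v.2 - y) %/ 3 == v.1)) ||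
    ((v.2 < y) && (x <= v.1) && ((v.1 - x) %/ 3 == v.2))].

Lemma star_row_le x y (i : 'I_(x + 3 * y)) :
  #|rowset (Sstar x y) i| <= (if i < x then 3 else 1).
Proof.
case: ifP => h.
  apply: (@row_le _ _ _ i [:: y + 3 * i; y + 3 * i + 1; y + 3 * i + 2]) => [[a b]].
  rewrite inE /= => H ha; rewrite ha in H; rewrite !inE; lia.
apply: (@row_le _ _ _ i [:: (i - x) %/ 3]) => [[a b]].
rewrite inE /= => H ha; rewrite ha in H; rewrite !inE; lia.
Qed.

Lemma star_row_ge x y (i : 'I_(x + 3 * y)) :
  (if i < x then 3 else 1) <= #|rowset (Sstar x y) i|.
Proof.
have hi := ltn_ord i.
case: ifP => h.
  apply: (@row_ge _ _ _ i [:: y + 3 * i; y + 3 * i + 1; y + 3 * i + 2]).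
  - rewrite /= !inE; lia.
  - rewrite /=; lia.
  - move=> j; rewrite !inE /= => H; lia.
apply: (@row_ge _ _ _ i [:: (i - x) %/ 3]).
- by [].
- rewrite /=; lia.
- move=> j; rewrite !inE /= => H; lia.
Qed.

Lemma star_col_le x y (j : 'I_(3 * x + y)) :
  #|colset (Sstar x y) j| <= (if j < y then 3 else 1).
Proof.
case: ifP => h.
  apply: (@col_le _ _ _ j [:: x + 3 * j; x + 3 * j + 1; x + 3 * j + 2]) => [[a b]].
  rewrite inE /= => H ha; rewrite ha in H; rewrite !inE; lia.
apply: (@col_le _ _ _ j [:: (j - y) %/ 3]) => [[a b]].
rewrite inE /= => H ha; rewrite ha in H; rewrite !inE; lia.
Qed.

Lemma star_col_ge x y (j : 'I_(3 * x + y)) :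
  (if j < y then 3 else 1) <= #|colset (Sstar x y) j|.
Proof.
have hj := ltn_ord j.
case: ifP => h.
  apply: (@col_ge _ _ _ j [:: x + 3 * j; x + 3 * j + 1; x + 3 * j + 2]).
  - rewrite /= !inE; lia.
  - rewrite /=; lia.
  - move=> i; rewrite !inE /= => H; lia.
apply: (@col_ge _ _ _ j [:: (j - y) %/ 3]).
- by [].
- rewrite /=; lia.
- move=> i; rewrite !inE /= => H; lia.
Qed.

Lemma comb_gen (b : bool) r c R C : R <= r -> C <= c -> 1 <= R -> 1 <= C ->
  (b -> 4 <= R + C) -> 2 + 2 * b <= r + c.
Proof. case: b => /= h1 h2 h3 h4 h5; [have := h5 isT|]; lia. Qed.

Lemma star_tot x y : total2dom (@KK_adj (x + 3 * y) (3 * x + y)) (Sstar x y).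
Proof.
apply: tot_of => v.
apply: (comb_gen (star_row_ge v.1) (star_col_ge v.2)).
- by case: ifP.
- by case: ifP.
- rewrite inE; case: ifP; case: ifP; lia.
Qed.

Lemma gamma_exact x y : 1 <= y -> y <= x -> x <= 3 * y ->
  gamma2t_KK (x + 3 * y) (3 * x + y) = 3 * (x + y).
Proof.
move=> h1 h2 h3; apply/eqP; rewrite eqn_leq; apply/andP; split.
  apply: leq_trans (gamma_le (star_tot x y)) _.
  rewrite card_rows.
  apply: leq_trans (@sum_split _ x _ 3 1 (leq_addr _ _) _ _) _.
  - by move=> i hi; have := star_row_le i; rewrite hi.
  - by move=> i hi; have := star_row_le i; rewrite ltnNge hi.
  - lia.
apply: gamma_ge.
  move=> S HS; case: (lowerL HS) => h.
    apply: leq_trans h; lia.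
  rewrite -(leq_pmul2l (isT : 0 < 4)); apply: leq_trans h; lia.
apply: (@leq_trans #|{: 'I_(x + 3 * y) * 'I_(3 * x + y)}|) => //.
rewrite card_prod !card_ord; nia.
Qed.

Lemma aux1 a s : 2 * a <= s -> 3 * a <= 2 * s. Proof. lia. Qed.
Lemma aux2 n m s : 3 * (n + m) <= 4 * s -> 3 * minn n m <= 2 * s. Proof. lia. Qed.

Lemma gamma_lower n m : 2 <= n -> 2 <= m -> 3 * minn n m <= 2 * gamma2t_KK n m.
Proof.
move=> hn hm; rewrite /gamma2t_KK /gamma2t.
apply: (big_ind (fun v => 3 * minn n m <= 2 * v)).
- apply: (@leq_trans (2 * #|{: 'I_n * 'I_m}|)); last by [].
  rewrite card_prod !card_ord; nia.
- move=> a b ha hb; cbv beta; lia.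
- move=> S HS; case: (lowerL HS) => h; [exact: aux1 h | exact: aux2 h].
Qed.


Local Open Scope R_scope.

Lemma floor_nat (r : R) : (0 <= r) ->
  (INR (Z.to_nat (Z.sub (up r) 1)) <= r < INR (Z.to_nat (Z.sub (up r) 1)) + 1).
Proof.
move=> hr; have [h1 h2] := archimed r.
have hz : Z.lt 0 (up r) by apply: lt_IZR; lra.
rewrite INR_IZR_INZ Z2Nat.id; last by lia.
rewrite minus_IZR; lra.
Qed.

Lemma ratio_star x y : (1 <= y)%N -> (y <= x)%N -> (x <= 3 * y)%N ->
  ratio (x + 3 * y)%N (3 * x + y)%N = (3 * (INR x + INR y) / (INR x + 3 * INR y)).
Proof.
move=> h1 h2 h3; rewrite /ratio gamma_exact //.
have -> : minn (x + 3 * y) (3 * x + y) = (x + 3 * y)%N by apply/minn_idPl; lia.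
have hy : 1 <= INR y by apply: (le_INR 1); apply/leP.
have hx := pos_INR x.
rewrite -!plusE -!multE !mult_INR !plus_INR ?mult_INR /=; field; lra.
Qed.

Local Close Scope R_scope.

Local Open Scope R_scope.


Lemma INR_pos2 k : (2 <= k)%N -> 2 <= INR k.
Proof. move=> h; apply: (le_INR 2); apply/leP; exact: h. Qed.

Lemma ratio_ge n m : (2 <= n)%N -> (2 <= m)%N -> 3 / 2 <= ratio n m.
Proof.
move=> hn hm; have H := gamma_lower hn hm.
rewrite /ratio; set g := gamma2t_KK n m in H *; set k := minn n m in H *.
have hk : 2 <= INR k by apply: INR_pos2; rewrite /k; lia.
have H' : 3 * INR k <= 2 * INR g.
  have := le_INR _ _ (elimT leP H); rewrite -!multE !mult_INR /=; lra.
apply: (Rmult_le_reg_r (INR k)); first lra.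
rewrite /Rdiv !Rmult_assoc Rinv_l; lra.
Qed.

Lemma ratio_le n m : (2 <= n)%N -> (2 <= m)%N -> ratio n m <= 2.
Proof.
move=> hn hm; have H := gamma_upper hn hm.
rewrite /ratio; set g := gamma2t_KK n m in H *; set k := minn n m in H *.
have hk : 2 <= INR k by apply: INR_pos2; rewrite /k; lia.
have H' : INR g <= 2 * INR k.
  have := le_INR _ _ (elimT leP H); rewrite -!multE !mult_INR /=; lra.
apply: (Rmult_le_reg_r (INR k)); first lra.
rewrite /Rdiv !Rmult_assoc Rinv_l; lra.
Qed.

Lemma INR3 : INR 3 / INR 2 = 3 / 2.
Proof. rewrite /=; field. Qed.
Lemma INR2 : INR 2 = 2.
Proof. rewrite /=; lra. Qed.

Lemma part1 : liminf2_is ratio (INR 3 / INR 2).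
Proof.
rewrite INR3; split.
  move=> eps he; exists 2%N => n m hn hm.
  have := ratio_ge (introT leP hn) (introT leP hm); lra.
move=> eps he N.
exists ((N + 1) + 3 * (N + 1))%N, (3 * (N + 1) + (N + 1))%N.
split; first by apply/leP; lia.
split; first by apply/leP; lia.
rewrite ratio_star; try lia.
have := pos_INR (N + 1).
set X := INR (N + 1); move=> hX.
have hX1 : 1 <= X by rewrite /X; apply: (le_INR 1); apply/leP; lia.
have -> : 3 * (X + X) / (X + 3 * X) = 3 / 2 by field; lra.
lra.
Qed.

Lemma part2 : limsup2_is ratio (INR 2).
Proof.
rewrite INR2; split.
  move=> eps he; exists 2%N => n m hn hm.
  have := ratio_le (introT leP hn) (introT leP hm); lra.
move=> eps he N.
exists (3 * (N + 1) + 3 * (N + 1))%N, (3 * (3 * (N + 1)) + (N + 1))%N.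
split; first by apply/leP; lia.
split; first by apply/leP; lia.
rewrite ratio_star; try lia.
rewrite -multE mult_INR.
have hX1 : 1 <= INR (N + 1) by apply: (le_INR 1); apply/leP; lia.
set X := INR (N + 1) in hX1 *.
have -> : 3 * (INR 3 * X + X) / (INR 3 * X + 3 * X) = 2 by rewrite /=; field; lra.
lra.
Qed.

Local Close Scope R_scope.

Lemma two_le x k : k < x -> (1 < x + 3 * k.+1) /\ (1 < 3 * x + k.+1).
Proof. split; lia. Qed.


Local Open Scope R_scope.

Lemma bound_est (a c X Y : R) : 3 / 2 <= a -> a <= 2 -> c * (3 - a) = 3 * a - 3 ->
  1 <= Y -> X <= c * Y -> c * Y < X + 1 -> Y <= X ->
  Rabs (3 * (X + Y) / (X + 3 * Y) - a) <= / Y.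
Proof.
move=> h1 h2 hc hY hx1 hx2 hx3.
have hD : 4 <= X + 3 * Y by lra.
have E0 : 3 * (X + Y) - a * (X + 3 * Y) = (3 - a) * (X - c * Y).
  have : c * (3 - a) * Y = (3 * a - 3) * Y by rewrite hc.
  lra.
have E : 3 * (X + Y) / (X + 3 * Y) - a = (3 - a) * (X - c * Y) * / (X + 3 * Y).
  rewrite -E0; field; lra.
rewrite E.
set I := / (X + 3 * Y).
have hI : 0 < I by apply: Rinv_0_lt_compat; lra.
have hI1 : I * (X + 3 * Y) = 1 by rewrite /I Rinv_l; lra.
set J := / Y.
have hJ : 0 < J by apply: Rinv_0_lt_compat; lra.
have hJ1 : J * Y = 1 by rewrite /J Rinv_l; lra.
have h4 : 4 * I <= J.
  have : 4 * I * Y <= J * Y by nra.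
  move=> h; apply: (Rmult_le_reg_r Y); lra.
have hd1 : X - c * Y <= 0 by lra.
have hd2 : -1 < X - c * Y by lra.
apply: Rabs_le; split.
  have : (3 - a) * (X - c * Y) >= - (3 - a) by nra.
  move=> h; have : (3 - a) * (X - c * Y) * I >= - (3 - a) * I by nra.
  nra.
have : (3 - a) * (X - c * Y) <= 0 by nra.
move=> h; nra.
Qed.

Definition xk (c : R) (k : nat) : nat := Z.to_nat (Z.sub (up (c * INR k.+1)) 1).

Lemma part3 (alpha : R) : Rle (Rdiv (INR 3) (INR 2)) alpha -> Rle alpha (INR 2) ->
  exists nk mk : nat -> nat,
    (forall k : nat, (2 <= nk k)%N /\ (2 <= mk k)%N) /\
    Un_cv (fun k : nat => ratio (nk k) (mk k)) alpha.
Proof.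
rewrite INR3 INR2 => h1 h2.
set c := (3 * alpha - 3) / (3 - alpha).
have hc : c * (3 - alpha) = 3 * alpha - 3 by rewrite /c; field; lra.
have hc1 : 1 <= c by nra.
have hc3 : c <= 3 by nra.
have facts : forall k : nat, let X := INR (xk c k) in let Y := INR k.+1 in
  [/\ 1 <= Y, X <= c * Y, c * Y < X + 1, (k.+1 <= xk c k)%N & (xk c k <= 3 * k.+1)%N].
  move=> k X Y.
  have hY : 1 <= Y by rewrite /Y; apply: (le_INR 1); apply/leP.
  have [f1 f2] := floor_nat (r := c * Y) ltac:(nra).
  rewrite -/(xk c k) -/X in f1 f2.
  split => //.
    apply/leP; apply: INR_lt; have hs : INR k.+1 = INR k + 1 := S_INR k; rewrite -/Y -/X in hs *; nra.
  apply/leP; apply: INR_le; rewrite -/X -multE mult_INR -/Y /=; nra.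
exists (fun k => xk c k + 3 * k.+1)%N, (fun k => 3 * xk c k + k.+1)%N.
split.
  move=> k; have [_ _ _ fy _] := facts k; exact: two_le.
move=> eps he.
have [N [hN hN0]] := archimed_cor1 _ he.
exists N => k hk.
have [fY fX1 fX2 fy fx] := facts k.
rewrite /Rdist ratio_star //.
apply: (Rle_lt_trans _ (/ INR k.+1)).
  apply: (@bound_est alpha c) => //; last by move/leP: fy => /le_INR; rewrite -/(INR k.+1).
  all: try lra.
apply: (Rle_lt_trans _ (/ INR N)) => //.
apply: Rinv_le_contravar; first by apply: lt_0_INR.
apply: le_INR; lia.
Qed.

Local Close Scope R_scope.

Theorem theorem18 :
  liminf2_is ratio (Rdiv (INR 3) (INR 2)) /\
  limsup2_is ratio (INR 2) /\
  (forall alpha : R, Rle (Rdiv (INR 3) (INR 2)) alpha -> Rle alpha (INR 2) ->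
     exists nk mk : nat -> nat,
       (forall k : nat, 2 <= nk k /\ 2 <= mk k) /\
       Un_cv (fun k : nat => ratio (nk k) (mk k)) alpha).
Proof.
split; first exact: part1.
split; first exact: part2.
exact: part3.
Qed.
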